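(* Let $L$ be a $\kappa$-frame and $C\in\mathbb{C}L$. The quotient $L/C$ is d-reduced if and only if $C$ is clear.
   Context: $\kappa$ is a fixed regular cardinal; a $\kappa$-frame is a bounded distributive lattice having joins of all subsets of cardinality $<\kappa$ and satisfying the frame distributive law for such joins. A $\kappa$-ideal is a downset in which every subset of cardinality $<\kappa$ has an upper bound. A congruence is an equivalence relation that is a sub-$\kappa$-frame of $L\times L$; $\mathbb{C}L$ is the frame of congruences. For a $\kappa$-ideal $I$, $\partial_I=\{(a,b)\mid\forall x\in L:\ a\wedge x\in I\iff b\wedge x\in I\}$; a congruence is clear if it equals $\partial_I$ for some $\kappa$-ideal $I$. For a $\kappa$-frame $M$, $\mathfrak{D}_M=\{(a,b)\mid\forall x\in M:\ a\wedge x=0\iff b\wedge x=0\}$, and $M$ is d-reduced if $\mathfrak{D}_M$ is the trivial (diagonal) congruence, i.e. $a\ne b$ implies there is $x$ with exactly one of $a\wedge x$, $b\wedge x$ equal to $0$. *)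

(* Defs.v *)
From Stdlib Require Import Classical ClassicalEpsilon FunctionalExtensionality PropExtensionality.

Set Implicit Arguments.

(** * Cardinals, via a representing type [K] *)

Definition card_le (A B : Type) : Prop := exists f : A -> B, forall x y, f x = f y -> x = y.

Definition card_lt (K A : Type) : Prop := card_le A K /\ ~ card_le K A.

Record regular_card (K : Type) : Prop := {
  rc_infinite : card_le nat K;
  rc_regular : forall (I : Type) (F : I -> Type),
      card_lt K I -> (forall i, card_lt K (F i)) -> card_lt K {i : I & F i}
}.

Definition small (K : Type) {L : Type} (S : L -> Prop) : Prop := card_lt K {x : L | S x}.

(** Data of a (candidate) kappa-frame: order, binary meet, bounds, and a join
    operation on subsets (only required to be the join on small subsets). *)
Record kFrameData := {
  car :> Type;
  le : car -> car -> Prop;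
  meet : car -> car -> car;
  bot : car;
  top : car;
  sup : (car -> Prop) -> car
}.

Arguments le {k} _ _.
Arguments meet {k} _ _.
Arguments bot {k}.
Arguments top {k}.
Arguments sup {k} _.

Definition img {A B : Type} (f : A -> B) (S : A -> Prop) : B -> Prop :=
  fun y => exists x, S x /\ y = f x.

(** [L] is a kappa-frame: a bounded lattice with joins of all subsets of
    cardinality < kappa satisfying the frame distributive law for such joins
    (binary joins are the joins of 2-element subsets, and binary
    distributivity is a special case of the frame law, kappa being infinite). *)
Record is_kFrame (K : Type) (L : kFrameData) : Prop := {
  kf_refl : forall a : L, le a a;
  kf_trans : forall a b c : L, le a b -> le b c -> le a c;
  kf_antisym : forall a b : L, le a b -> le b a -> a = b;
  kf_meet_l : forall a b : L, le (meet a b) a;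
  kf_meet_r : forall a b : L, le (meet a b) b;
  kf_meet_glb : forall a b c : L, le c a -> le c b -> le c (meet a b);
  kf_bot : forall a : L, le bot a;
  kf_top : forall a : L, le a top;
  kf_sup_ub : forall S : L -> Prop, small K S -> forall x, S x -> le x (sup S);
  kf_sup_least : forall (S : L -> Prop) (u : L), small K S ->
      (forall x, S x -> le x u) -> le (sup S) u;
  kf_distr : forall (S : L -> Prop) (a : L), small K S ->
      meet a (sup S) = sup (img (meet a) S)
}.

(** An equivalence relation on [L] which is a sub-kappa-frame of [L x L]
    (joins and meets in [L x L] being computed componentwise). *)
Record congruence (K : Type) (L : kFrameData) (C : L -> L -> Prop) : Prop := {
  cg_refl : forall a, C a a;
  cg_sym : forall a b, C a b -> C b a;
  cg_trans : forall a b c, C a b -> C b c -> C a c;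
  cg_bot : C bot bot;
  cg_top : C top top;
  cg_meet : forall a b c d, C a b -> C c d -> C (meet a c) (meet b d);
  cg_sup : forall S : L * L -> Prop, small K S ->
      (forall p, S p -> C (fst p) (snd p)) ->
      C (sup (img fst S)) (sup (img snd S))
}.

Record kIdeal (K : Type) (L : kFrameData) (I : L -> Prop) : Prop := {
  ki_down : forall a b : L, le a b -> I b -> I a;
  ki_dir : forall S : L -> Prop, small K S -> (forall x, S x -> I x) ->
      exists u, I u /\ forall x, S x -> le x u
}.

Definition partialI {L : kFrameData} (I : L -> Prop) (a b : L) : Prop :=
  forall x : L, I (meet a x) <-> I (meet b x).

Definition clear (K : Type) (L : kFrameData) (C : L -> L -> Prop) : Prop :=
  exists I, kIdeal K L I /\ forall a b, C a b <-> partialI (L:=L) I a b.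

Definition DRel {M : kFrameData} (a b : M) : Prop :=
  forall x : M, meet a x = bot <-> meet b x = bot.

Definition d_reduced (M : kFrameData) : Prop :=
  forall a b : M, DRel a b -> a = b.

Section Quotient.
Variables (L : kFrameData) (C : L -> L -> Prop).

Definition qcar : Type := {P : L -> Prop | exists a, P = C a}.

Definition qcls (a : L) : qcar := exist _ (C a) (ex_intro _ a eq_refl).

Definition qrep (q : qcar) : L := proj1_sig (constructive_indefinite_description _ (proj2_sig q)).

Definition quotient : kFrameData := {|
  car := qcar;
  le := fun q r => C (meet (qrep q) (qrep r)) (qrep q);
  meet := fun q r => qcls (meet (qrep q) (qrep r));
  bot := qcls bot;
  top := qcls top;
  sup := fun S => qcls (sup (img qrep S))
|}.
End Quotient.

(* Main.v *)
Require Import Defs.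
From Stdlib Require Import Classical ClassicalEpsilon FunctionalExtensionality PropExtensionality ProofIrrelevance.

Lemma sig_ext A (Q : A -> Prop) (x y : sig Q) : proj1_sig x = proj1_sig y -> x = y.
Proof. destruct x as [x px], y as [y py]; simpl; intros ->; f_equal; apply proof_irrelevance. Qed.

Lemma card_le_trans A B D : card_le A B -> card_le B D -> card_le A D.
Proof.
  intros [f hf] [g hg]. exists (fun x => g (f x)). intros x y h. apply hf, hg, h.
Qed.

Lemma small_transfer K A B : card_le A B -> card_le B A -> card_lt K A -> card_lt K B.
Proof.
  intros hab hba [h1 h2]. split.
  - eapply card_le_trans; eauto.
  - intro h. apply h2. eapply card_le_trans; eauto.
Qed.

Section S.
Variables (K : Type) (HK : regular_card K) (L : kFrameData) (HL : is_kFrame K L)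
  (C : L -> L -> Prop) (HC : congruence K L C).

Lemma qcls_eq a b : C a b -> qcls L C a = qcls L C b.
Proof.
  intro h. apply sig_ext. simpl. apply functional_extensionality; intro x.
  apply propositional_extensionality. split; intro h'.
  - eapply (cg_trans HC). apply (cg_sym HC), h. exact h'.
  - eapply (cg_trans HC). apply h. exact h'.
Qed.

Lemma qcls_eq_inv a b : qcls L C a = qcls L C b -> C a b.
Proof.
  intro h. apply (f_equal (@proj1_sig _ _)) in h. simpl in h.
  rewrite h. apply (cg_refl HC).
Qed.

Lemma qrep_spec (q : qcar L C) : proj1_sig q = C (qrep q).
Proof. unfold qrep. destruct (constructive_indefinite_description _ _) as [a ha]. exact ha. Qed.

Lemma qrep_cls a : C (qrep (qcls L C a)) a.
Proof.
  pose proof (qrep_spec (qcls L C a)) as h. simpl in h. rewrite <- h. apply (cg_refl HC).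
Qed.

Lemma meet_bot (a : L) : meet a bot = bot.
Proof. apply (kf_antisym HL). apply (kf_meet_r HL). apply (kf_bot HL). Qed.

Lemma meet_top (a : L) : meet a top = a.
Proof. apply (kf_antisym HL). apply (kf_meet_l HL). apply (kf_meet_glb HL). apply (kf_refl HL). apply (kf_top HL). Qed.

Lemma meet_botl (a : L) : meet bot a = bot.
Proof. apply (kf_antisym HL). apply (kf_meet_l HL). apply (kf_bot HL). Qed.

Lemma DRel_iff a b :
  DRel (M := quotient L C) (qcls L C a) (qcls L C b) <->
  (forall y, C (meet a y) bot <-> C (meet b y) bot).
Proof.
  assert (Hm : forall a y, C (meet (qrep (qcls L C a)) (qrep (qcls L C y))) (meet a y)).
  { intros. apply (cg_meet HC); apply qrep_cls. }
  assert (Hq : forall a (x : quotient L C),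
    meet (k:=quotient L C) (qcls L C a) x = bot <-> C (meet a (qrep x)) bot).
  { intros a0 x. simpl. split; intro h.
    - apply qcls_eq_inv in h. eapply (cg_trans HC); [|exact h].
      apply (cg_meet HC). apply (cg_sym HC), qrep_cls. apply (cg_refl HC).
    - apply qcls_eq. eapply (cg_trans HC); [|exact h].
      apply (cg_meet HC). apply qrep_cls. apply (cg_refl HC). }
  assert (Hr : forall a y, C (meet a (qrep (qcls L C y))) (meet a y)).
  { intros. apply (cg_meet HC). apply (cg_refl HC). apply qrep_cls. }
  unfold DRel. split.
  - intros h y. specialize (h (qcls L C y)). rewrite !Hq in h.
    split; intro h'.
    + eapply (cg_trans HC). apply (cg_sym HC), Hr. apply h. eapply (cg_trans HC). apply Hr. exact h'.
    + eapply (cg_trans HC). apply (cg_sym HC), Hr. apply h. eapply (cg_trans HC). apply Hr. exact h'.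
  - intros h x. rewrite !Hq. apply h.
Qed.

Lemma small_sub_bot (T : L -> Prop) : (forall y, T y -> y = bot) -> small K T.
Proof.
  intro hT. split.
  - eapply card_le_trans; [|exact (rc_infinite HK)].
    exists (fun _ => 0). intros [x px] [y py] _. apply sig_ext; simpl.
    rewrite (hT x px), (hT y py). reflexivity.
  - intro h. assert (h2 := card_le_trans _ _ _ (rc_infinite HK) h). destruct h2 as [f hf].
    assert (e : f 0 = f 1).
    { apply sig_ext. destruct (f 0) as [x px], (f 1) as [y py]; simpl.
      rewrite (hT x px), (hT y py). reflexivity. }
    apply hf in e. discriminate.
Qed.

End S.
Arguments meet_bot {K L} HL a.
Arguments meet_top {K L} HL a.
Arguments meet_botl {K L} HL a.
Arguments qcls_eq {K L C} HC a b.
Arguments qcls_eq_inv {K L C} HC a b.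
Arguments DRel_iff {K L C} HC a b.
Arguments small_sub_bot {K} HK {L} T.
Arguments qrep_spec {L C} q.

Theorem mainTheorem11 (K : Type) (HK : regular_card K)
  (L : kFrameData) (HL : is_kFrame K L)
  (C : L -> L -> Prop) (HC : congruence K L C) :
  d_reduced (quotient L C) <-> clear K L C.
Proof.
  split.
  - intro hd. exists (fun a => C a bot). split.
    + split.
      * intros a b hab hb. assert (e : meet a b = a).
        { apply (kf_antisym HL). apply (kf_meet_l HL). apply (kf_meet_glb HL). apply (kf_refl HL). exact hab. }
        rewrite <- e. rewrite <- (meet_bot HL a). apply (cg_meet HC). apply (cg_refl HC). exact hb.
      * intros S hS hI.
        set (S' := img (fun x => (x, @bot L)) S).
        assert (hS' : small K S').
        { eapply small_transfer; [| |exact hS].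
          - exists (fun x : {x | S x} => exist S' (proj1_sig x, bot) (ex_intro _ (proj1_sig x) (conj (proj2_sig x) eq_refl))).
            intros [x px] [y py] e. apply sig_ext. simpl. apply (f_equal (@proj1_sig _ _)) in e.
            simpl in e. injection e; auto.
          - assert (f : forall p : {p | S' p}, S (fst (proj1_sig p))).
            { intros [p [x [hx ->]]]; exact hx. }
            exists (fun p : {p | S' p} => exist S (fst (proj1_sig p)) (f p)).
            intros [p pp] [q pq] e. apply sig_ext. simpl. apply (f_equal (@proj1_sig _ _)) in e. simpl in e.
            destruct pp as [x [_ ->]], pq as [y [_ ->]]. simpl in e. subst. reflexivity. }
        assert (hc := cg_sup HC hS').
        assert (e1 : img fst S' = S).
        { apply functional_extensionality; intro y. apply propositional_extensionality. split.
          - intros [p [[x [hx ->]] ->]]. exact hx.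
          - intro hy. exists (y, bot). split; [exists y; auto | reflexivity]. }
        assert (hb : forall y, img snd S' y -> y = bot).
        { intros y [p [[x [_ ->]] ->]]. reflexivity. }
        assert (e2 : sup (img snd S') = bot).
        { apply (kf_antisym HL). apply (kf_sup_least HL). apply (small_sub_bot HK). exact hb.
          intros x hx. rewrite (hb x hx). apply (kf_refl HL). apply (kf_bot HL). }
        rewrite e1, e2 in hc. exists (sup S). split.
        -- apply hc. intros p [x [hx ->]]. simpl. apply hI, hx.
        -- intros x hx. apply (kf_sup_ub HL); assumption.
    + intros a b. unfold partialI. split.
      * intros hab x. split; intro h.
        -- eapply (cg_trans HC); [|exact h]. apply (cg_meet HC). apply (cg_sym HC), hab. apply (cg_refl HC).
        -- eapply (cg_trans HC); [|exact h]. apply (cg_meet HC). exact hab. apply (cg_refl HC).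
      * intro h. apply (qcls_eq_inv HC). apply hd. apply (DRel_iff HC). exact h.
  - intros [I [hI hCI]] q r hqr.
    assert (eq : forall q : quotient L C, q = qcls L C (qrep q)).
    { intro q0. apply sig_ext. simpl. apply qrep_spec. }
    rewrite (eq q), (eq r) in hqr |- *. apply (qcls_eq HC).
    set (a := qrep q) in *. set (b := qrep r) in *. clearbody a b.
    pose proof (proj1 (DRel_iff HC a b) hqr) as hqr'; clear hqr; rename hqr' into hqr.
    assert (hI0 : I bot).
    { destruct (@ki_dir K L I hI (fun _ => False)) as [u [hu _]].
      - apply (small_sub_bot HK (fun _ => False)). intros _ [].
      - intros _ [].
      - apply (ki_down hI _ u). apply (kf_bot HL). exact hu. }
    assert (hz : forall z, C z bot <-> I z).
    { intro z. rewrite hCI. unfold partialI. split.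
      - intro h. specialize (h top). rewrite (meet_top HL) in h. apply h. rewrite (meet_botl HL). exact hI0.
      - intros h x. rewrite (meet_botl HL). split; intro; auto.
        apply (ki_down hI _ z). apply (kf_meet_l HL). exact h. }
    apply hCI. intro x. rewrite <- !hz. apply hqr.
Qed.
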